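(* Let $\alpha$ be a (jointly continuous) action of a locally compact group $G$ on a locally compact Hausdorff space $M$, and so on $C_\infty(M)$ via $(\alpha_xf)(m)=f(\alpha_x^{-1}(m))$. If $\alpha$ on $C_\infty(M)$ is integrable, then every $\alpha$-orbit in $M$ is closed, and the stability subgroup of each point of $M$ is compact.
   Context: $G$ carries a fixed left Haar measure. Let $\mathcal B$ be the set of $\lambda\in L^\infty(G)$ with compact support and $0\le\lambda\le1$, directed pointwise; for $a\in A=C_\infty(M)$, $p_\lambda(a)=\int\lambda(x)\alpha_x(a)\,dx$. An element $a\in A^+$ is order-integrable if $\sup_{\lambda\in\mathcal B}\|p_\lambda(a)\|<\infty$ (equivalently the increasing net is bounded above in $A''$); $\mathcal M_\alpha$ is the linear span of order-integrable elements, and $\alpha$ is integrable if $\mathcal M_\alpha$ is dense in $A$. *)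

(* Defs.v *)
From HB Require Import structures.
From mathcomp Require Import all_boot all_order all_algebra.
From mathcomp Require Import all_classical all_reals all_analysis.
Set Implicit Arguments. Unset Strict Implicit. Unset Printing Implicit Defensive.
Import Order.TTheory GRing.Theory Num.Theory.
Import numFieldNormedType.Exports.
Local Open Scope classical_set_scope.
Local Open Scope ring_scope.

Definition borel_of (T : ptopologicalType) := g_sigma_algebraType (@open T).

Definition is_group (G : Type) (mul : G -> G -> G) (inv : G -> G) (one : G) :=
  [/\ (forall x y z, mul x (mul y z) = mul (mul x y) z),
      (forall x, mul one x = x /\ mul x one = x) &
      (forall x, mul (inv x) x = one /\ mul x (inv x) = one)].

Definition locally_compact_group (G : ptopologicalType)
    (mul : G -> G -> G) (inv : G -> G) (one : G) :=
  [/\ is_group mul inv one,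
      continuous (fun p : G * G => mul p.1 p.2),
      continuous inv,
      hausdorff_space G &
      locally_compact [set: G]].

Definition is_left_Haar (R : realType) (G : ptopologicalType)
    (mul : G -> G -> G) (mu : set (borel_of G) -> \bar R) :=
  [/\ (forall (x : G) (A : set (borel_of G)), measurable A ->
         mu [set mul x y | y in A] = mu A),
      (forall K : set G, compact K -> (mu K < +oo)%E),
      (forall U : set G, open U -> U !=set0 -> (0 < mu U)%E),
      (forall A : set (borel_of G), measurable A ->
         mu A = ereal_inf [set mu U | U in [set U : set G | open U /\ A `<=` U]]) &
      (forall U : set G, open U ->
         mu U = ereal_sup [set mu K | K in [set K : set G | compact K /\ K `<=` U]])].

Definition continuous_action (G : ptopologicalType) (M : topologicalType)
    (mul : G -> G -> G) (one : G) (act : G -> M -> M) :=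
  [/\ (forall m, act one m = m),
      (forall x y m, act (mul x y) m = act x (act y m)) &
      continuous (fun p : G * M => act p.1 p.2)].

Definition C_infty (R : realType) (M : topologicalType) (f : M -> R) :=
  continuous f /\
  forall eps : R, 0 < eps ->
    exists K : set M, compact K /\ forall m, ~ K m -> `|f m| < eps.

Definition alpha (R : realType) (G : Type) (M : Type)
    (inv : G -> G) (act : G -> M -> M) (x : G) (f : M -> R) : M -> R :=
  fun m => f (act (inv x) m).

(** The index set B: measurable (representatives of L^infty) functions with
    0 <= lambda <= 1 vanishing outside a compact set. *)
Definition cutoffB (R : realType) (G : ptopologicalType) (lam : G -> R) :=
  [/\ measurable_fun (setT : set (borel_of G)) (lam : borel_of G -> R),
      (forall x, 0 <= lam x <= 1) &
      exists K : set G, compact K /\ forall x, ~ K x -> lam x = 0].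

Definition p_lambda (R : realType) (G : ptopologicalType) (M : Type)
    (inv : G -> G) (act : G -> M -> M) (mu : set (borel_of G) -> \bar R)
    (lam : G -> R) (a : M -> R) (m : M) : \bar R :=
  (\int[mu]_(x in (setT : set (borel_of G))) (lam x * alpha inv act x a m)%:E)%E.

Definition order_integrable (R : realType) (G : ptopologicalType)
    (M : topologicalType) (inv : G -> G) (act : G -> M -> M)
    (mu : set (borel_of G) -> \bar R) (a : M -> R) :=
  [/\ C_infty a,
      (forall m, 0 <= a m) &
      exists C : R, forall lam : G -> R, cutoffB lam ->
        forall m, (`| p_lambda inv act mu lam a m | <= C%:E)%E].

Definition M_alpha (R : realType) (G : ptopologicalType)
    (M : topologicalType) (inv : G -> G) (act : G -> M -> M)
    (mu : set (borel_of G) -> \bar R) (f : M -> R) :=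
  exists s : seq (R * (M -> R)),
    (forall p, p \in s -> order_integrable inv act mu p.2) /\
    f = fun m => \sum_(p <- s) p.1 * p.2 m.

Definition integrable_action (R : realType) (G : ptopologicalType)
    (M : topologicalType) (inv : G -> G) (act : G -> M -> M)
    (mu : set (borel_of G) -> \bar R) :=
  forall f : M -> R, C_infty f ->
    forall eps : R, 0 < eps ->
      exists g : M -> R, M_alpha inv act mu g /\ forall m, `|f m - g m| <= eps.

(* Main.v *)
Require Import Defs.
From HB Require Import structures.
From mathcomp Require Import all_boot all_order all_algebra.
From mathcomp Require Import all_classical all_reals all_analysis.
Import Order.TTheory GRing.Theory Num.Theory.
Import numFieldNormedType.Exports.
Local Open Scope classical_set_scope.
Local Open Scope ring_scope.
From mathcomp Require Import lra.

Section GroupFacts.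
Lemma grp_inv_inv (G : Type) (mul : G -> G -> G) (inv : G -> G) (one : G) :
  is_group mul inv one -> forall x, inv (inv x) = x.
Proof.
case=> mA m1 mV x.
by rewrite -[LHS](m1 _).2 -(mV x).1 mA (mV (inv x)).1 (m1 _).1.
Qed.

Lemma grp_inv_mul (G : Type) (mul : G -> G -> G) (inv : G -> G) (one : G) :
  is_group mul inv one -> forall x y, inv (mul x y) = mul (inv y) (inv x).
Proof.
move=> hG; case: (hG) => mA m1 mV x y.
have h : mul (mul (inv y) (inv x)) (mul x y) = one.
  by rewrite -mA [mul (inv x) _]mA (mV x).1 (m1 _).1 (mV y).1.
rewrite -[LHS](m1 _).1 -h -mA (mV _).2 (m1 _).2 //.
Qed.

Lemma grp_inv_one (G : Type) (mul : G -> G -> G) (inv : G -> G) (one : G) :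
  is_group mul inv one -> inv one = one.
Proof. by case=> mA m1 mV; rewrite -[LHS](m1 _).2 (mV one).1. Qed.
End GroupFacts.

Lemma Cinf_bump (R : realType) (M : topologicalType) :
  hausdorff_space M -> locally_compact [set: M] ->
  forall n : M, exists f : M -> R, C_infty f /\ f n = 1.
Proof.
move=> hM lcM n.
have [K Kn [cK clK]] := lcM n I.
have nK : nbhs n K by move: Kn; rewrite withinET.
pose B := ~` K°.
have clB : closed B by rewrite /B closedC; exact: open_interior.
have nBn : ~ B n by rewrite /B => /(_ nK).
have us := @locally_compact_completely_regular M R lcM hM n B clB nBn.
pose u : M -> R := Urysohn [set n] B.
exists (fun x => 1 - u x); split; last first.
  have u0 : u n = 0 by apply: (Urysohn_sub0 (R:=R) us); exists n.
  by rewrite u0 subr0.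
split.
  move=> x; apply: cvgB; first exact: cvg_cst.
  exact: Urysohn_continuous.
move=> eps eps0; exists K; split => // x nKx.
have Bx : B x by move=> /interior_subset.
have u1 : u x = 1 by apply: (Urysohn_sub1 (R:=R) us); exists x.
by rewrite u1 subrr normr0.
Qed.

Lemma exists_oi (R : realType) (G : ptopologicalType) (inv : G -> G)
    (mu : {measure set (borel_of G) -> \bar R})
    (M : topologicalType) (act : G -> M -> M) :
  hausdorff_space M -> locally_compact [set: M] ->
  integrable_action inv act mu ->
  forall n : M, exists a : M -> R, order_integrable inv act mu a /\ 0 < a n.
Proof.
move=> hM lcM hI n.
have [f [Cf fn]] := @Cinf_bump R M hM lcM n.
have [g [[s [hs ->]] hg]] := hI f Cf (1/2) ltac:(by rewrite divr_gt0).
have gn0 : \sum_(p <- s) p.1 * p.2 n != 0.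
  apply/eqP => e; have := hg n; rewrite fn e subr0 normr1.
  by rewrite ler_pdivlMr // mul1r; lra.
have [p ps pn] : exists2 p, p \in s & p.2 n != 0.
  case: (pselect (exists2 p, p \in s & p.2 n != 0)) => // hn.
  exfalso; move: gn0; rewrite big_seq big1 ?eqxx // => p ps.
  apply/eqP; rewrite mulf_eq0; apply/orP; right; apply/negPn/negP => h.
  by apply: hn; exists p.
exists p.2; split; first exact: hs.
have [_ a0 _] := hs p ps.
by rewrite lt_neqAle eq_sym pn a0.
Qed.

Lemma int_mono d (T : measurableType d) (R : realType) (mu : {measure set T -> \bar R})
  (f g : T -> \bar R) : (forall x, 0 <= f x)%E -> (forall x, f x <= g x)%E ->
  (\int[mu]_(x in setT) f x <= \int[mu]_(x in setT) g x)%E.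
Proof.
move=> f0 fg.
have g0 : forall x, (0 <= g x)%E by move=> x; exact: le_trans (f0 x) (fg x).
rewrite !ge0_integralTE//=.
apply: ge_ereal_sup => _ [h /= hf <-]; apply: ereal_sup_ubound; exists h => //= x.
exact: le_trans (hf x) _.
Qed.

Lemma cont_mul2 (G : topologicalType) (mul : G -> G -> G)
  (mulC : continuous (fun p : G * G => mul p.1 p.2)) (T : topologicalType)
  (f g : T -> G) : continuous f -> continuous g -> continuous (fun x => mul (f x) (g x)).
Proof.
move=> cf cg x; apply: continuous2_cvg; [exact: (mulC (f x, g x)) | exact: cf | exact: cg].
Qed.

Lemma cont_fst (U V : topologicalType) : continuous (@fst U V).
Proof. by move=> p; exact: cvg_fst. Qed.

Lemma cont_snd (U V : topologicalType) : continuous (@snd U V).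
Proof. by move=> p; exact: cvg_snd. Qed.

Lemma open_meas (G : ptopologicalType) (A : set G) : open A -> measurable (A : set (borel_of G)).
Proof. by move=> oA; exact: sub_sigma_algebra. Qed.

Lemma key (R : realType) (G : ptopologicalType)
    (mul : G -> G -> G) (inv : G -> G) (one : G)
    (mu : {measure set (borel_of G) -> \bar R})
    (M : topologicalType) (act : G -> M -> M) :
  locally_compact_group mul inv one ->
  is_left_Haar mul mu ->
  continuous_action mul one act ->
  forall a : M -> R, order_integrable inv act mu a ->
  forall m n : M, 0 < a n ->
  exists U0 : set M, nbhs n U0 /\
    exists L : set G, compact L /\ forall x, U0 (act x m) -> L x.
Proof.
move=> [grp mulC invC _ lcG] [Hinv _ Hpos _ _] [act1 actM actC] a
  [[acont _] a0 [C HC]] m n an.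
have ii := @grp_inv_inv _ _ _ _ grp; have im := @grp_inv_mul _ _ _ _ grp; have i1 := @grp_inv_one _ _ _ _ grp.
case: (grp) => mA m1 mV.
pose c := a n / 2.
have c0 : 0 < c by rewrite divr_gt0.
have can : c < a (act (one, n).1 (one, n).2) by rewrite /= act1 /c; lra.
have hc : {for (one, n), continuous (a \o (fun z : G * M => act z.1 z.2))}.
  exact: continuous_comp (actC (one, n)) (acont _).
have hP := hc _ (lt_nbhsr can).
have [[W1 U0] [W1o U0n] WU] := hP.
exists U0; split => //.
have [K Ko [cK clK]] := lcG one I.
have nK : nbhs one K by move: Ko; rewrite withinET.
pose W := K° `&` W1°.
have oW : open W by apply: openI; exact: open_interior.
have Wone : W one by split.
have WK : W `<=` K by move=> y [/interior_subset].
have WW1 : W `<=` W1 by move=> y [_ /interior_subset].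
pose D (x : G) : set G := [set y | W (mul (inv y) (inv x))].
have cD x : continuous (fun y => mul (inv y) (inv x)).
  apply: (@cont_mul2 _ _ mulC _ inv (fun _ => inv x) invC) => y; exact: cvg_cst.
have oD x : open (D x) by exact: (proj1 (continuousP _) (cD x) W oW).
have mD x : measurable (D x : set (borel_of G)) by exact: open_meas.
pose Wi : set G := inv @^-1` W.
have oWi : open Wi by exact: (proj1 (continuousP _) invC W oW).
have mWi : measurable (Wi : set (borel_of G)) by exact: open_meas.
have Wione : Wi one by rewrite /Wi /= i1.
have muD x : mu (D x) = mu Wi.
  have -> : D x = [set mul (inv x) z | z in Wi].
    apply/seteqP; split => y.
      move=> Dy; exists (mul x y); first by rewrite /Wi /= im.
      by rewrite mA (mV x).1 (m1 _).1.
    case=> z Wiz <-; rewrite /D /= im ii -mA (mV x).2 (m1 _).2.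
    exact: Wiz.
  exact: Hinv.
have cWpos : (0 < mu Wi)%E by apply: Hpos => //; exists one.
have [r r0 rle] : exists2 r : R, 0 < r & (r%:E <= mu Wi)%E.
  move: cWpos; case: (mu Wi) => [r| |].
  - by move=> r0; exists r.
  - by move=> _; exists 1 => //; exact: leey.
  - by [].
pose Kx (x : G) : set G := [set mul (mul (inv p.2) p.1) x | p in K `*` K].
have cKx x : compact (Kx x).
  apply: continuous_compact; last exact: compact_setX.
  apply: continuous_subspaceT.
  apply: (@cont_mul2 _ _ mulC _ (fun p : G * G => mul (inv p.2) p.1) (fun _ => x)).
    apply: (@cont_mul2 _ _ mulC _ (fun p : G * G => inv p.2) (fun p => p.1)).
      by move=> p; apply: continuous_comp; [exact: cont_snd | exact: invC].
    exact: cont_fst.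
  by move=> p; exact: cvg_cst.
have disj x x' : ~ Kx x x' -> D x `&` D x' = set0.
  move=> nK'; apply/seteqP; split => // y [Dy Dy']; apply: nK'.
  exists (mul (inv y) (inv x), mul (inv y) (inv x')); first by split; apply: WK.
  rewrite /= im !ii -!mA (mV x).1 (m1 _).2 (mV y).2 (m1 _).2 //.
pose Supp (x : G) : set G := [set mul (inv x) (inv k) | k in K].
have cSupp x : compact (Supp x).
  apply: continuous_compact => //; apply: continuous_subspaceT.
  apply: (@cont_mul2 _ _ mulC _ (fun _ => inv x) inv) => //.
  by move=> p; exact: cvg_cst.
have DSupp x : D x `<=` Supp x.
  move=> y Dy; exists (mul (inv y) (inv x)); first exact: WK.
  by rewrite im !ii mA (mV x).1 (m1 _).1.
pose S : set G := [set y | c < a (act (inv y) m)].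
have DS x : U0 (act x m) -> D x `<=` S.
  move=> Ux y Dy.
  have e : inv y = mul (mul (inv y) (inv x)) x by rewrite -mA (mV x).1 (m1 _).2.
  rewrite /S /= e actM.
  by apply: (WU (_, _)); split => //; apply: WW1.
apply: contrapT => nL.
have step : forall N : nat, exists V : set G, exists L : set G, exists Sp : set G,
    [/\ measurable (V : set (borel_of G)), ((N%:R * r)%:E <= mu V)%E, V `<=` S,
       compact L /\ (forall x', ~ L x' -> D x' `&` V = set0) &
       compact Sp /\ V `<=` Sp].
  elim => [|N [V [L [Sp [mV' muV VS [cL dL] [cSp VSp]]]]]].
    exists set0, set0, set0; split => //.
    - by rewrite mul0r measure0.
    - by split; [exact: compact0 | move=> x' _; rewrite setI0].
    - by split; [exact: compact0|].
  have [x' [Ux' nLx']] : exists x', U0 (act x' m) /\ ~ L x'.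
    apply: contrapT => h; apply: nL; exists L; split => // x Ux.
    by apply: contrapT => nLx; apply: h; exists x.
  exists (D x' `|` V), (Kx x' `|` L), (Supp x' `|` Sp); split.
  - exact: measurableU.
  - have e2 : mu (D x' `|` V) = (mu (D x') + mu V)%E.
      exact: (measureU mu (mD x') mV' (dL x' nLx')).
    rewrite e2 muD -addn1 natrD mulrDl mul1r EFinD addeC.
    exact: leeD.
  - by move=> y [/(DS x' Ux')|/VS].
  - split; first exact: compactU.
    move=> x'' nx''; apply/seteqP; split => // y [Dy [Dy'|Vy]].
      have e := disj x' x'' (fun h => nx'' (or_introl h)).
      have : (D x' `&` D x'') y by split.
      by rewrite e.
    have e := dL x'' (fun h => nx'' (or_intror h)).
    have : (D x'' `&` V) y by split.
    by rewrite e.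
  - split; first exact: compactU.
    by move=> y [/DSupp|/VSp]; [left|right].
pose N := (Num.truncn (C / (c * r))).+1.
have hN : C / (c * r) < N%:R by exact: truncnS_gt.
have [V [L [Sp [mV' muV VS _ [cSp VSp]]]]] := step N.
pose lam : G -> R := \1_V.
have clam : cutoffB lam.
  split.
  - exact: measurable_realfun.measurable_indic.
  - by move=> x; rewrite /lam indicE; case: (x \in V) => /=; rewrite ?lexx ?ler01.
  - exists Sp; split => // x nSx; rewrite /lam indicE memNset //.
    by move=> /VSp.
have low : (c%:E * mu V <= p_lambda inv act mu lam a m)%E.
  rewrite /p_lambda.
  have e : (\int[mu]_(x in setT) (c * \1_V x)%:E = c%:E * mu V)%E.
    rewrite (integralZl_indic _ (fun _ : R => (V : set (borel_of G)))) //.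
      by rewrite integral_indic // setIT.
    by move=> /(lt_trans c0); rewrite ltxx.
  rewrite -e; apply: int_mono.
    by move=> x; rewrite lee_fin mulr_ge0 // ?ltW // indicE; case: (x \in V).
  move=> x; rewrite lee_fin /lam /alpha indicE.
  case: (boolP (x \in V)) => xV /=.
    by rewrite mulr1 mul1r; apply: ltW; exact: VS (set_mem xV).
  by rewrite mulr0 mul0r.
have := HC lam clam m.
have h1 : ((c * (N%:R * r))%:E <= c%:E * mu V)%E.
  by rewrite EFinM; apply: lee_wpmul2l => //; rewrite lee_fin ltW.
move=> h2.
have := le_trans h1 (le_trans low (le_trans (lee_abs _) h2)).
rewrite lee_fin.
have : C < c * (N%:R * r).
  by rewrite ltr_pdivrMr ?mulr_gt0 // in hN; rewrite mulrCA.
by move=> /lt_le_trans h /h; rewrite ltxx.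
Qed.

Theorem proposition1p17 (R : realType) (G : ptopologicalType)
    (mul : G -> G -> G) (inv : G -> G) (one : G)
    (mu : {measure set (borel_of G) -> \bar R})
    (M : topologicalType) (act : G -> M -> M) :
  locally_compact_group mul inv one ->
  is_left_Haar mul mu ->
  hausdorff_space M ->
  locally_compact [set: M] ->
  continuous_action mul one act ->
  integrable_action inv act mu ->
  forall m : M,
    closed [set act x m | x in [set: G]] /\
    compact [set x : G | act x m = m].
Proof.
move=> hG hmu hM lcM hact hI m.
have cm : continuous (fun x => act x m).
  case: hact => _ _ actC x.
  apply: (@continuous2_cvg _ _ _ _ _ _ (fun x => x) (fun _ => m) act x m).
  - exact: (actC (x, m)).
  - exact: cvg_id.
  - exact: cvg_cst.
split.
  move=> n cln.
  have [a [oi an]] := @exists_oi R G inv mu M act hM lcM hI n.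
  have [U0 [nU0 [L [cL UL]]]] := @key R G mul inv one mu M act hG hmu hact a oi m n an.
  pose I := [set act x m | x in L].
  have cI : compact I by apply: continuous_compact => //; exact: continuous_subspaceT.
  have clI := compact_closed hM cI.
  have : closure I n.
    move=> B nB.
    have [_ [[x _ <-] [U0x Bx]]] := cln (U0 `&` B) (filterI nU0 nB).
    by exists (act x m); split => //; exists x => //; exact: UL.
  by move=> /clI [x _ <-]; exists x.
have [a [oi am]] := @exists_oi R G inv mu M act hM lcM hI m.
have [U0 [nU0 [L [cL UL]]]] := @key R G mul inv one mu M act hG hmu hact a oi m m am.
have cl1 : closed [set m] by apply: accessible_closed_set1; exact: hausdorff_accessible.
have oH : open (~` [set x : G | act x m = m]).
  apply: ((continuousP _).1 cm (~` [set m])).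
  by rewrite openC.
apply: (subclosed_compact _ cL).
  by rewrite -openC.
move=> x /= e; apply: UL; rewrite e; exact: nbhs_singleton.
Qed.
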